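(* Let $X$ be a compact metric space, $f\colon X\to X$ continuous with $h_{\mathrm{top}}(f)<\infty$, and $\Phi,\Psi\in C(X)^d$. If $A\subset\mathbb{R}^d$ is compact, then for every $\xi\in C(X)$, $$\overline{\mathcal{F}}(A,\xi)=\sup_{\alpha\in A}\overline{\mathcal{F}}(\{\alpha\},\xi).$$
   Context: $S_n\phi(x)=\sum_{k=0}^{n-1}\phi(f^kx)$; $B(x,n,\delta)=\{y\mid d(f^kx,f^ky)<\delta\text{ for }0\le k\le n\}$. $\Phi=(\varphi_1,\dots,\varphi_d)$, $\Psi=(\psi_1,\dots,\psi_d)$, $\mathcal{A}_n(x)=(S_n\varphi_i(x)/S_n\psi_i(x))_{i=1}^d$, and for open $U\subset\mathbb{R}^d$, $G_n(U)=\{x\in X\mid\mathcal{A}_n(x)\in U\}$. For a sequence $(Z_n)$ of subsets of $X$, $\Lambda_n(Z_n,\xi,\delta)=\inf\{\sum_{x\in E}e^{S_n\xi(x)}\mid\bigcup_{x\in E}B(x,n,\delta)\supset Z_n\}$ and $\overline{CP}_{(Z_n)}(\xi)=\lim_{\delta\to0}\limsup_{n\to\infty}\frac1n\log\Lambda_n(Z_n,\xi,\delta)$. The upper coarse spectrum is $\overline{\mathcal{F}}(A,\xi)=\inf_{U\supset A}\overline{CP}_{(G_n(U))}(\xi)$, the infimum over all open $U\subset\mathbb{R}^d$ containing $A$. *)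

(* Defs.v *)
From HB Require Import structures.
From mathcomp Require Import all_boot all_order all_algebra.
From mathcomp Require Import all_classical all_reals all_analysis.
Set Implicit Arguments. Unset Strict Implicit. Unset Printing Implicit Defensive.
Import Order.TTheory GRing.Theory Num.Theory.
Import numFieldNormedType.Exports.
Local Open Scope classical_set_scope.
Local Open Scope ring_scope.

Section Defs.
Variables (R : realType) (X : metricType R).

Definition birkhoff (f : X -> X) (n : nat) (phi : X -> R) (x : X) : R :=
  \sum_(k < n) phi (iter k f x).

Definition bowen_ball (f : X -> X) (x : X) (n : nat) (delta : R) : set X :=
  [set y | forall k : nat, (k <= n)%N -> mdist (iter k f x) (iter k f y) < delta].

Definition Lambda (f : X -> X) (n : nat) (Z : set X) (xi : X -> R) (delta : R)
  : \bar R :=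
  ereal_inf [set ((\sum_(x <- E) expR (birkhoff f n xi x))%:E : \bar R) |
             E in [set E : seq X | Z `<=` \bigcup_(x in [set` E]) bowen_ball f x n delta]].

Definition elog (a : \bar R) : \bar R :=
  match a with
  | EFin r => if r <= 0 then -oo%E else (ln r)%:E
  | EPInf => +oo%E
  | ENInf => -oo%E
  end.

Definition upper_cap_pressure (f : X -> X) (Z : nat -> set X) (xi : X -> R)
  : \bar R :=
  lim ((fun delta : R =>
          limn_esup (fun n : nat => (((n%:R)^-1)%:E * elog (Lambda f n (Z n) xi delta))%E))
       @ 0^'+).

Definition htop (f : X -> X) : \bar R :=
  upper_cap_pressure f (fun _ => [set: X]) (fun _ => 0).

Variable d : nat.

Definition Aavg (f : X -> X) (Phi Psi : 'I_d -> X -> R) (n : nat) (x : X)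
  : 'rV[R]_d :=
  \row_i (birkhoff f n (Phi i) x / birkhoff f n (Psi i) x).

Definition Gset (f : X -> X) (Phi Psi : 'I_d -> X -> R) (U : set 'rV[R]_d)
  (n : nat) : set X :=
  [set x | U (Aavg f Phi Psi n x)].

Definition upper_coarse_spectrum (f : X -> X) (Phi Psi : 'I_d -> X -> R)
  (A : set 'rV[R]_d) (xi : X -> R) : \bar R :=
  ereal_inf [set upper_cap_pressure f (Gset f Phi Psi U) xi |
             U in [set U : set 'rV[R]_d | open U /\ A `<=` U]].

End Defs.

(* Main.v *)
Require Import Defs.
From HB Require Import structures.
From mathcomp Require Import all_boot all_order all_algebra.
From mathcomp Require Import all_classical all_reals all_analysis.
From mathcomp Require Import lra finmap.
Import Order.TTheory GRing.Theory Num.Theory.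
Import numFieldNormedType.Exports.
Local Open Scope classical_set_scope.
Local Open Scope ring_scope.

Section Aux.
Context (R : realType) (X : metricType R) (f : X -> X) (xi : X -> R).

Definition Lfun (Z : nat -> set X) (delta : R) : \bar R :=
  limn_esup (fun n : nat => (((n%:R)^-1)%:E * elog (Lambda f n (Z n) xi delta))%E).

Lemma Lambda_ge0 n Z delta : (0 <= Lambda f n Z xi delta)%E.
Proof.
apply: le_ereal_inf_tmp => _ [E _ <-].
by rewrite lee_fin; apply: sumr_ge0 => i _; rewrite expR_ge0.
Qed.

Lemma Lambda_anti n Z d1 d2 : d1 <= d2 ->
  (Lambda f n Z xi d2 <= Lambda f n Z xi d1)%E.
Proof.
move=> d12; apply: ereal_inf_le_tmp => _ [E HE <-]; exists E => //.
move=> z /HE [x Ex Bx]; exists x => //.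
by move=> k kn; apply: lt_le_trans (Bx k kn) d12.
Qed.

Lemma elog_le (a b : \bar R) : (0 <= a)%E -> (a <= b)%E -> (elog a <= elog b)%E.
Proof.
case: a => [a| |] //; case: b => [b| |] //= a0 ab; rewrite ?leey //.
rewrite !lee_fin in a0 ab.
case: ifP => a0'; first by rewrite leNye.
have b0 : (b <= 0) = false.
  apply/negbTE; apply: contraFN a0' => b0.
  exact: le_trans ab b0.
by rewrite b0 lee_fin ler_ln // ?posrE ltNge ?a0' ?b0.
Qed.

Lemma Lfun_anti Z : {in `]0, +oo[ &, {homo Lfun Z : x y / x <= y >-> (y <= x)%E}}.
Proof.
move=> d1 d2 _ _ d12; rewrite /Lfun /limn_esup /limf_esup.
apply: le_ereal_inf_tmp => _ [V HV <-].
apply: le_trans; first by apply: ereal_inf_lbound; exists V.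
apply: ge_ereal_sup => _ [n Vn <-].
apply: le_ereal_sup_tmp; eexists; first by exists n.
apply: lee_wpmul2l; first by rewrite lee_fin invr_ge0.
by apply: elog_le; [exact: Lambda_ge0| exact: Lambda_anti].
Qed.

Lemma CP_sup Z : upper_cap_pressure f Z xi = ereal_sup (Lfun Z @` `]0, +oo[).
Proof.
apply/cvg_lim => //.
exact: (nonincreasing_at_right_cvge (BInfty _ false)) (Lfun_anti Z).
Qed.


Lemma elog_lt (a : \bar R) y : (0 <= a)%E -> (elog a < y%:E)%E -> (a < (expR y)%:E)%E.
Proof.
case: a => [a| |] //= a0; rewrite ?lte_fin.
case: ifP => a0'; first by move=> _; apply: le_lt_trans (expR_gt0 _); rewrite a0'.
rewrite lte_fin => lay.
have apos : 0 < a by rewrite ltNge a0'.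
by rewrite -(lnK apos) ltr_expR.
Qed.

Lemma elog_EFin_le (a : \bar R) y : (0 < y) -> (0 <= a)%E -> (a <= y%:E)%E -> (elog a <= (ln y)%:E)%E.
Proof.
move=> y0 a0 ay; apply: (@le_trans _ _ (elog y%:E)); first exact: elog_le.
have y0' : (y <= 0) = false by rewrite leNgt y0.
by rewrite /= y0'.
Qed.

Lemma Lambda_lt n Z delta y : (Lambda f n Z xi delta < y%:E)%E ->
  exists2 E : seq X, Z `<=` \bigcup_(x in [set` E]) bowen_ball f x n delta &
    \sum_(x <- E) expR (birkhoff f n xi x) < y.
Proof.
by move=> /ereal_inf_lt [_ [E HE <-]]; rewrite lte_fin => HEy; exists E.
Qed.

Lemma step n Z1 Z2 delta r : (0 < n)%N ->
 ((n%:R^-1)%:E * elog (Lambda f n Z1 xi delta) < r%:E)%E ->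
 ((n%:R^-1)%:E * elog (Lambda f n Z2 xi delta) < r%:E)%E ->
 ((n%:R^-1)%:E * elog (Lambda f n (Z1 `|` Z2) xi delta) <= (n%:R^-1 * ln 2 + r)%:E)%E.
Proof.
move=> n0; have nR : (0 : R) < n%:R by rewrite ltr0n.
rewrite !lte_pdivrMl // -!EFinM => /(elog_lt _ _ (Lambda_ge0 _ _ _)) h1.
move=> /(elog_lt _ _ (Lambda_ge0 _ _ _)) h2.
have [E1 HE1 s1] := Lambda_lt _ _ _ _ h1.
have [E2 HE2 s2] := Lambda_lt _ _ _ _ h2.
rewrite lee_pdivrMl // -EFinM.
have -> : n%:R * (n%:R^-1 * ln 2 + r) = ln 2 + n%:R * r.
  by rewrite mulrDr mulrA mulfV ?mul1r // gt_eqF.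
have -> : ln 2 + n%:R * r = ln (2 * expR (n%:R * r)) :> R.
  by rewrite lnM ?posrE ?expR_gt0 // expRK.
apply: elog_EFin_le; first by rewrite mulr_gt0 ?expR_gt0.
  exact: Lambda_ge0.
apply: (@le_trans _ _ ((\sum_(x <- E1 ++ E2) expR (birkhoff f n xi x))%:E)).
  apply: ereal_inf_lbound; exists (E1 ++ E2) => //.
  move=> z [/HE1|/HE2] [x xE Bx]; exists x => //=; rewrite mem_cat xE ?orbT //.
rewrite lee_fin big_cat /= mulr2n mulrDl mul1r.
by apply: lerD; apply: ltW.
Qed.


Lemma esup_lt (u : (\bar R)^nat) m : (limn_esup u < m)%E ->
  exists2 V, \oo V & forall n, V n -> (u n < m)%E.
Proof.
move=> /ereal_inf_lt [_ [V HV <-]] Vm; exists V => // n Vn.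
apply: le_lt_trans Vm; apply: ereal_sup_ubound; by exists n.
Qed.

Lemma le_by_reals (x M : \bar R) : (forall m : R, (M < m%:E)%E -> (x <= m%:E)%E) -> (x <= M)%E.
Proof.
case: M => [M| |] h; rewrite ?leey //.
  case: x h => [x| |] h; last by rewrite leNye.
    rewrite lee_fin leNgt; apply/negP => Mx.
    have := h ((M + x) / 2); rewrite !lte_fin lee_fin.
    have -> : M < (M + x) / 2 by lra.
    by move=> /(_ isT); lra.
  have := h (M + 1); rewrite lte_fin => /(_ ltac:(lra)); by [].
case: x h => [x| |] h //.
  by have := h (x - 1); rewrite ltNyr lee_fin => /(_ isT) H; exfalso; lra.
by have := h 0; rewrite ltNyr => /(_ isT).
Qed.

Lemma dense_real (M : \bar R) m : (M < m%:E)%E -> exists r : R, (M < r%:E)%E /\ r < m.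
Proof.
case: M => [M| |] //.
  rewrite lte_fin => Mm; exists ((M + m) / 2); rewrite lte_fin; split; lra.
by move=> _; exists (m - 1); rewrite ltNyr; split => //; lra.
Qed.

Lemma Lfun_union Z1 Z2 delta :
  (Lfun (fun n => Z1 n `|` Z2 n) delta <= Order.max (Lfun Z1 delta) (Lfun Z2 delta))%E.
Proof.
apply: le_by_reals => m /dense_real [r [Mr rm]].
move: Mr; rewrite gt_max => /andP [/esup_lt [V1 HV1 h1] /esup_lt [V2 HV2 h2]].
have mr0 : 0 < m - r by lra.
have l2 : 0 <= ln (2 : R) by rewrite ln_ge0 // ler1n.
set N := Num.Def.archi_bound (ln 2 / (m - r)).
have HN : ln 2 / (m - r) < N%:R by apply: archi_boundP; rewrite divr_ge0 // ltW.
have HV : \oo (V1 `&` V2 `&` [set n | (N <= n)%N]).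
  by apply: filterI; [apply: filterI|exists N].
apply: le_trans; first by apply: ereal_inf_lbound; exists (V1 `&` V2 `&` [set n | (N <= n)%N]).
apply: ge_ereal_sup => _ [n [[V1n V2n] Nn] <-].
have nN : (N%:R : R) <= n%:R by rewrite ler_nat.
have n0 : (0 : R) < n%:R.
  apply: lt_le_trans nN; apply: le_lt_trans HN; rewrite divr_ge0 // ltW //.
have n0' : (0 < n)%N by rewrite -(ltr0n R).
apply: le_trans; first exact: (step _ _ _ _ _ n0' (h1 n V1n) (h2 n V2n)).
rewrite lee_fin.
have H : n%:R^-1 * ln 2 < m - r.
  rewrite ltr_pdivrMl //; move: (lt_le_trans HN nN); rewrite ltr_pdivrMr // => H; nra.
lra.
Qed.



Definition CP Z := upper_cap_pressure f Z xi.

Lemma CP_union Z1 Z2 :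
  (CP (fun n => Z1 n `|` Z2 n) <= Order.max (CP Z1) (CP Z2))%E.
Proof.
rewrite /CP !CP_sup; apply: ge_ereal_sup => _ [dl dlpos <-].
apply: le_trans (Lfun_union _ _ _) _.
rewrite ge_max !le_max; apply/andP; split; apply/orP; [left|right];
  by apply: ereal_sup_ubound; exists dl.
Qed.

Lemma CP_mono Z Z' : (forall n, Z n `<=` Z' n) -> (CP Z <= CP Z')%E.
Proof.
move=> ZZ; rewrite /CP !CP_sup; apply: ge_ereal_sup => _ [dl dlpos <-].
apply: le_trans; last by apply: ereal_sup_ubound; exists dl.
rewrite /Lfun /limn_esup /limf_esup.
apply: le_ereal_inf_tmp => _ [V HV <-].
apply: le_trans; first by apply: ereal_inf_lbound; exists V.
apply: ge_ereal_sup => _ [n Vn <-].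
apply: le_ereal_sup_tmp; eexists; first by exists n.
apply: lee_wpmul2l; first by rewrite lee_fin invr_ge0.
apply: elog_le; first exact: Lambda_ge0.
apply: ereal_inf_le_tmp => _ [E HE <-]; exists E => //.
by move=> z /ZZ /HE.
Qed.

Lemma CP_empty : CP (fun _ => set0) = -oo%E.
Proof.
apply/eqP; rewrite -leeNy_eq /CP CP_sup; apply: ge_ereal_sup => _ [dl dlpos <-].
rewrite /Lfun /limn_esup /limf_esup.
apply: le_trans; first by apply: ereal_inf_lbound; exists [set n | (1 <= n)%N] => //; exists 1%N.
apply: ge_ereal_sup => _ [n n1 <-].
have -> : Lambda f n set0 xi dl = 0%E.
  apply/eqP; rewrite eq_le Lambda_ge0 andbT.
  apply: le_trans; first by apply: ereal_inf_lbound; exists [::].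
  by rewrite big_nil.
rewrite /= lexx mulrNy gtr0_sg ?invr_gt0 ?ltr0n // mul1e.
by [].
Qed.

End Aux.

Theorem proposition2p1 (R : realType) (X : metricType R)
  (hX : compact [set: X]) (f : X -> X) (hf : continuous f)
  (hent : (htop f < +oo)%E)
  (d : nat) (Phi Psi : 'I_d -> X -> R)
  (hPhi : forall i, continuous (Phi i)) (hPsi : forall i, continuous (Psi i))
  (A : set 'rV[R]_d) (hA : compact A)
  (xi : X -> R) (hxi : continuous xi) :
  upper_coarse_spectrum f Phi Psi A xi =
  ereal_sup [set upper_coarse_spectrum f Phi Psi [set alpha] xi | alpha in A].
Proof.
apply/eqP; rewrite eq_le; apply/andP; split; last first.
  apply: ge_ereal_sup => _ [a Aa <-].
  apply: ereal_inf_le_tmp => _ [U [oU AU] <-]; exists U => //; split => //.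
  by move=> _ ->; exact: AU.
apply: le_by_reals => m hm.
have hU : forall a, exists U : set 'rV[R]_d, A a ->
    [/\ open U, U a & (upper_cap_pressure f (Gset f Phi Psi U) xi < m%:E)%E].
  move=> a; have [Aa|nAa] := pselect (A a); last by exists set0.
  have : (upper_coarse_spectrum f Phi Psi [set a] xi < m%:E)%E.
    by apply: le_lt_trans hm; apply: ereal_sup_ubound; exists a.
  move=> /ereal_inf_lt [_ [U [oU aU] <-] HU]; exists U => _; split => //.
  exact: aU.
have [g hg] := choice hU.
move: hA; rewrite compact_cover => /(_ _ A g) [].
- by move=> a /hg [].
- by move=> a Aa; exists a => //; have [] := hg a Aa.
move=> D' D'A cov.
have key : forall s : seq 'rV[R]_d, (forall i, i \in s -> A i) ->
    (upper_cap_pressure f (Gset f Phi Psi (\bigcup_(i in [set` s]) g i)) xi <= m%:E)%E.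
  elim => [|i s IH] sA.
    apply: le_trans; first apply: (@CP_mono _ _ _ _ _ (fun _ => set0)).
      by move=> n x /= [j].
    by rewrite CP_empty leNye.
  apply: le_trans; first apply: (@CP_mono _ _ _ _ _ (fun n =>
     Gset f Phi Psi (g i) n `|` Gset f Phi Psi (\bigcup_(j in [set` s]) g j) n)).
    move=> n x /= [j]; rewrite /= inE => /orP [/eqP ->|js] gj; [left|right] => //.
    by exists j.
  apply: le_trans (CP_union _ _ _ _ _ _) _.
  rewrite ge_max; apply/andP; split.
    have [_ _ /ltW] := hg i (sA i (mem_head _ _)); exact.
  by apply: IH => j js; apply: sA; rewrite inE js orbT.
have H1 : (upper_coarse_spectrum f Phi Psi A xi <=
   upper_cap_pressure f (Gset f Phi Psi (cover [set` D'] g)) xi)%E.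
  apply: ereal_inf_lbound; exists (cover [set` D'] g) => //; split => //.
  by apply: bigcup_open => i /= iD; have [] := hg i (set_mem (D'A _ iD)).
apply: le_trans H1 _.
apply: (key (D' : seq _)) => i iD; exact: set_mem (D'A _ iD).
Qed.
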